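(* Let $a,N$ be natural numbers and let $K$ be a closed subset of $([0,1]^a)^N$. Let $X(K)=\{x\in([0,1]^a)^{\mathbb{Z}}:\exists \ell\in\mathbb{Z}\ \forall n\in\mathbb{Z},\ x|_{\ell+nN}^{\ell+(n+1)N-1}\in K\}$. Then $\overline{\mathrm{mdim}}_{\mathrm{M}}(X(K),\sigma,D)\le \frac{\overline{\dim}_{\mathrm{M}}(K,\|\cdot\|_\infty)}{N}$.
   Context: For $x=(x_n)_{n\in\mathbb{Z}}\in([0,1]^a)^{\mathbb{Z}}$ and integers $\ell<m$, $x|_\ell^m=(x_\ell,\dots,x_m)\in([0,1]^a)^{m-\ell+1}$. $\sigma$ is the shift $(x_n)_n\mapsto(x_{n+1})_n$; $X(K)$ is a shift-invariant closed set. $D((x_n),(y_n))=\sum_{n\in\mathbb{Z}}2^{-|n|}\|x_n-y_n\|_\infty$ with $\|\cdot\|_\infty$ the max norm; on $([0,1]^a)^N\subset\mathbb{R}^{aN}$, $\|\cdot\|_\infty$ is the max over all coordinates. For a compact metric space $(E,\rho)$, $\#(E,\rho,\varepsilon)$ is the minimal number of open sets of $\rho$-diameter $<\varepsilon$ covering $E$, and $\overline{\dim}_{\mathrm{M}}(E,\rho)=\limsup_{\varepsilon\to0}\frac{\log\#(E,\rho,\varepsilon)}{\log(1/\varepsilon)}$. For $(X,T)$ with metric $d$, $d_L(x,y)=\max_{0\le n<L}d(T^nx,T^ny)$, and $\overline{\mathrm{mdim}}_{\mathrm{M}}(X,T,d)=\limsup_{\varepsilon\to0}\lim_{L\to\infty}\frac{\log\#(X,d_L,\varepsilon)}{L\log(1/\varepsilon)}$.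 *)

(* Defs.v *)
From HB Require Import structures.
From mathcomp Require Import all_boot all_order all_algebra.
From mathcomp Require Import all_classical all_reals all_analysis.
Set Implicit Arguments. Unset Strict Implicit. Unset Printing Implicit Defensive.
Import Order.TTheory GRing.Theory Num.Theory.
Import numFieldNormedType.Exports.
Local Open Scope classical_set_scope.
Local Open Scope ring_scope.

Section Defs.
Variable R : realType.

Definition p_open_in {T : Type} (E : set T) (rho : T -> T -> R) (U : set T) :=
  forall x, U x -> exists2 r : R, 0 < r & forall y, E y -> rho x y < r -> U y.

(* rho-diameter of U, in the extended reals (sup of the empty set is -oo) *)
Definition p_diam {T : Type} (rho : T -> T -> R) (U : set T) : \bar R :=
  ereal_sup [set (rho x y)%:E | x in U & y in U].

Definition p_has_cover {T : Type} (E : set T) (rho : T -> T -> R) (eps : R) (n : nat) :=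
  exists U : 'I_n -> set T,
    [/\ forall i, U i `<=` E,
        forall i, p_open_in E rho (U i),
        forall i, (p_diam rho (U i) < eps%:E)%E
      & E `<=` \bigcup_i U i].

(* #(E, rho, eps) : minimal number of such open sets (+oo if none) *)
Definition p_covnum {T : Type} (E : set T) (rho : T -> T -> R) (eps : R) : \bar R :=
  ereal_inf [set (n%:R)%:E | n in p_has_cover E rho eps].

Definition p_logE (x : \bar R) : \bar R :=
  match x with
  | EFin r => (ln r)%:E
  | +oo%E => +oo%E
  | -oo%E => -oo%E
  end.

Definition upper_mink_dim {T : Type} (E : set T) (rho : T -> T -> R) : \bar R :=
  limf_esup (fun eps : R => (p_logE (p_covnum E rho eps) * (ln (eps^-1))^-1%:E)%E)
            (0 : R)^'+.

Definition p_bowen {T : Type} (d : T -> T -> R) (f : T -> T) (L : nat) (x y : T) : R :=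
  \big[Num.max/0]_(n < L) d (iter n f x) (iter n f y).

(* upper metric mean dimension:
   limsup_{eps -> 0+} lim_{L -> oo} log #(X, d_L, eps) / (L log (1/eps));
   the limit in L is taken as a limsup *)
Definition upper_mmdim {T : Type} (X : set T) (f : T -> T) (d : T -> T -> R) : \bar R :=
  limf_esup (fun eps : R =>
     limn_esup (fun L : nat =>
       (p_logE (p_covnum X (p_bowen d f L) eps) * ((L%:R * ln (eps^-1))^-1)%:E)%E))
   (0 : R)^'+.

Definition p_in_cube (a : nat) (p : 'I_a -> R) := forall i, 0 <= p i <= 1.

Definition p_supdist (a : nat) (p q : 'I_a -> R) : R :=
  \big[Num.max/0]_(i < a) `|p i - q i|.

Definition supdistN (a N : nat) (p q : 'I_N -> 'I_a -> R) : R :=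
  \big[Num.max/0]_(j < N) \big[Num.max/0]_(i < a) `|p j i - q j i|.

Definition in_cubeN (a N : nat) (p : 'I_N -> 'I_a -> R) := forall j, p_in_cube (p j).

Definition closed_cubeN (a N : nat) (K : set ('I_N -> 'I_a -> R)) :=
  K `<=` in_cubeN (a:=a) (N:=N) /\
  forall y, in_cubeN y -> ~ K y ->
    exists2 r : R, 0 < r & forall z, in_cubeN z -> supdistN y z < r -> ~ K z.

Definition p_seqZ (a : nat) := int -> 'I_a -> R.

Definition p_shift (a : nat) (x : p_seqZ a) : p_seqZ a := fun n => x (n + 1)%R.

(* D(x,y) = sum_{n in Z} 2^{-|n|} ||x_n - y_n||_oo, written as a series over k = |n| *)
Definition p_Dterm (a : nat) (x y : p_seqZ a) (k : nat) : R :=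
  if k == 0%N then p_supdist (x 0) (y 0)
  else (2^-1) ^+ k * (p_supdist (x k%:Z) (y k%:Z) + p_supdist (x (- k%:Z)) (y (- k%:Z))).

Definition p_Dmetric (a : nat) (x y : p_seqZ a) : R := limn (series (p_Dterm x y)).

Definition p_restr (a N : nat) (x : p_seqZ a) (l : int) : 'I_N -> 'I_a -> R :=
  fun j => x (l + (nat_of_ord j)%:Z)%R.

Definition p_XK (a N : nat) (K : set ('I_N -> 'I_a -> R)) : set (p_seqZ a) :=
  [set x | (forall n, p_in_cube (x n)) /\
           exists l : int, forall n : int, K (@p_restr a N x (l + n * N%:Z)%R)].

End Defs.

(* Main.v *)
Require Import Defs.
From HB Require Import structures.
From mathcomp Require Import all_boot all_order all_algebra.
From mathcomp Require Import all_classical all_reals all_analysis.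
From mathcomp Require Import zify ring lra.
Set Implicit Arguments. Unset Strict Implicit. Unset Printing Implicit Defensive.
Import Order.TTheory GRing.Theory Num.Theory.
Import numFieldNormedType.Exports.
Local Open Scope classical_set_scope.
Local Open Scope ring_scope.
Section P1.
Variable R : realType.

Lemma bmax_ub (n : nat) (F : 'I_n -> R) i : F i <= \big[Num.max/0]_(j < n) F j.
Proof.
rewrite (bigD1 i) //= le_max lexx //.
Qed.

Lemma bmax_le (n : nat) (F : 'I_n -> R) b : 0 <= b -> (forall i, F i <= b) ->
  \big[Num.max/0]_(j < n) F j <= b.
Proof.
move=> b0 Fb; elim/big_ind: _ => //.
by move=> x y xb yb; rewrite ge_max xb yb.
Qed.

Lemma bmax_ge0 (n : nat) (F : 'I_n -> R) : 0 <= \big[Num.max/0]_(j < n) F j.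
Proof.
elim/big_rec: _ => // i x _ x0; by rewrite le_max x0 orbT.
Qed.

Lemma geo_sum m K : \sum_(k < K | (m <= k)%N) (2^-1 : R) ^+ k + 2 * (2^-1) ^+ (maxn K m)
   = 2 * (2^-1) ^+ m.
Proof.
elim: K => [|K IH].
  by rewrite big_ord0 add0r max0n.
rewrite big_mkcond big_ord_recr /= -big_mkcond /=.
case: (leqP m K) => hmK.
  have -> : maxn K.+1 m = K.+1 by apply/maxn_idPl; lia.
  have e : maxn K m = K by apply/maxn_idPl.
  rewrite e in IH; rewrite -IH exprS; field; by [].
have -> : maxn K.+1 m = m by apply/maxn_idPr.
have e : maxn K m = m by apply/maxn_idPr; apply: ltnW.
rewrite e in IH; by rewrite addr0.
Qed.

Lemma geo_le m K : \sum_(k < K | (m <= k)%N) (2^-1 : R) ^+ k <= 2 * (2^-1) ^+ m.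
Proof.
rewrite -(geo_sum m K) lerDl; apply: mulr_ge0 => //; apply: exprn_ge0; by [].
Qed.

Lemma geo_le0 K : \sum_(k < K) (2^-1 : R) ^+ k <= 2.
Proof.
have := geo_le 0 K; rewrite expr0 mulr1; by [].
Qed.

End P1.
Section P2.
Variable R : realType.
Variable a : nat.

Definition cubeZ (x : p_seqZ R a) := forall n, p_in_cube (x n).

Lemma supdist_ge0 (p q : 'I_a -> R) : 0 <= p_supdist p q.
Proof. exact: bmax_ge0. Qed.

Lemma supdist_comp (p q : 'I_a -> R) i : `|p i - q i| <= p_supdist p q.
Proof. exact: (bmax_ub (fun i => `|p i - q i|)). Qed.

Lemma abs_le1 (u v : R) : 0 <= u <= 1 -> 0 <= v <= 1 -> `|u - v| <= 1.
Proof.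
move=> /andP[u0 u1] /andP[v0 v1]; rewrite ler_norml; apply/andP; split; lra.
Qed.

Lemma supdist_le1 (p q : 'I_a -> R) : p_in_cube p -> p_in_cube q -> p_supdist p q <= 1.
Proof.
move=> hp hq; apply: bmax_le => // i; exact: abs_le1.
Qed.

Lemma Dterm_ge0 (x y : p_seqZ R a) k : 0 <= p_Dterm x y k.
Proof.
rewrite /p_Dterm; case: eqP => _; first exact: supdist_ge0.
apply: mulr_ge0; first exact: exprn_ge0.
by apply: addr_ge0; exact: supdist_ge0.
Qed.

Lemma Dterm_le (x y : p_seqZ R a) k : cubeZ x -> cubeZ y ->
  p_Dterm x y k <= 2 * (2^-1) ^+ k.
Proof.
move=> cx cy; rewrite /p_Dterm; case: eqP => [->|_].
  rewrite expr0 mulr1; apply: le_trans (supdist_le1 (cx _) (cy _)) _; lra.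
rewrite mulrC ler_pM2r; last by apply: exprn_gt0.
have := supdist_le1 (cx k%:Z) (cy k%:Z); have := supdist_le1 (cx (- k%:Z)) (cy (- k%:Z)).
lra.
Qed.

Lemma Dseries_cvg (x y : p_seqZ R a) : cubeZ x -> cubeZ y ->
  cvgn (series (p_Dterm x y)).
Proof.
move=> cx cy; apply: nondecreasing_is_cvgn.
  rewrite seriesEnat; apply: (@nondecreasing_series _ _ xpredT 0) => n _ _.
  exact: Dterm_ge0.
exists 4 => _ [n _ <-]; rewrite seriesEord /=.
apply: le_trans (_ : \sum_(k < n) 2 * (2^-1) ^+ k <= 4).
  by apply: ler_sum => k _; exact: Dterm_le.
rewrite -mulr_sumr; have := @geo_le0 R n; lra.
Qed.

Lemma Dterm_leD (x y : p_seqZ R a) k : cubeZ x -> cubeZ y ->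
  p_Dterm x y k <= p_Dmetric x y.
Proof.
move=> cx cy; rewrite /p_Dmetric; apply: limr_ge; first exact: Dseries_cvg.
near=> n.
have hn : (k < n)%N by near: n; exists k.+1 => // m /=; rewrite /= ?inE; lia.
rewrite seriesEord /= (bigD1 (Ordinal hn)) //= lerDl.
by apply: sumr_ge0 => i _; exact: Dterm_ge0.
Unshelve. all: by end_near.
Qed.

Lemma D_le_of (x y : p_seqZ R a) (g : nat -> R) b : cubeZ x -> cubeZ y ->
  (forall k, p_Dterm x y k <= g k) -> (forall K, \sum_(k < K) g k <= b) ->
  p_Dmetric x y <= b.
Proof.
move=> cx cy hg hb; rewrite /p_Dmetric; apply: limr_le; first exact: Dseries_cvg.
near=> n; rewrite seriesEord /=; apply: le_trans (hb n).
by apply: ler_sum => k _; exact: hg.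
Unshelve. all: by end_near.
Qed.

Lemma D_ge0 (x y : p_seqZ R a) : cubeZ x -> cubeZ y -> 0 <= p_Dmetric x y.
Proof. move=> cx cy; apply: le_trans (Dterm_leD 0 cx cy); exact: Dterm_ge0. Qed.

End P2.
Section P3.
Variable R : realType.
Variable a : nat.
Local Notation D := (@p_Dmetric R a).
Local Notation sh := (@p_shift R a).

Lemma iter_shift n (x : p_seqZ R a) i : iter n sh x i = x (i + n%:Z).
Proof.
elim: n i => [|n IH] i; first by rewrite addr0.
rewrite iterS /p_shift IH; congr x; rewrite -addn1 PoszD; ring.
Qed.

Lemma cubeZ_iter n (x : p_seqZ R a) : cubeZ x -> cubeZ (iter n sh x).
Proof. by move=> cx i; rewrite iter_shift. Qed.

Lemma half_exp_pos k : 0 < (2^-1 : R) ^+ k.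
Proof. by apply: exprn_gt0. Qed.

Lemma half_exp_inv k : (2^-1 : R) ^+ k * 2 ^+ k = 1.
Proof. by rewrite -exprMn mulVf // expr1n. Qed.

Lemma Dterm_S (x y : p_seqZ R a) k : (0 < k)%N ->
  p_Dterm x y k = (2^-1) ^+ k * (p_supdist (x k%:Z) (y k%:Z) + p_supdist (x (- k%:Z)) (y (- k%:Z))).
Proof. by rewrite /p_Dterm; case: k. Qed.

Lemma sd_le_term (x y : p_seqZ R a) (t : int) :
  p_supdist (x t) (y t) <= 2 ^+ (absz t) * p_Dterm x y (absz t).
Proof.
have key : forall k, (0 < k)%N -> forall s, s = k%:Z \/ s = - k%:Z ->
   p_supdist (x s) (y s) <= 2 ^+ k * p_Dterm x y k.
  move=> k k0 s hs; rewrite Dterm_S // mulrA (mulrC (2 ^+ k)) half_exp_inv mul1r.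
  have := supdist_ge0 (x k%:Z) (y k%:Z); have := supdist_ge0 (x (- k%:Z)) (y (- k%:Z)).
  case: hs => ->; lra.
case: t => n.
  case: n => [|n]; first by rewrite /= expr0 mul1r /p_Dterm.
  by apply: key => //; left.
apply: key => //; right; by rewrite NegzE.
Qed.

Lemma coord_le (x y : p_seqZ R a) t c : cubeZ x -> cubeZ y ->
  `|x t c - y t c| <= 2 ^+ (absz t) * D x y.
Proof.
move=> cx cy; apply: le_trans (supdist_comp _ _ c) _.
apply: le_trans (sd_le_term x y t) _.
rewrite ler_pM2l; last exact: exprn_gt0.
exact: Dterm_leD.
Qed.

Lemma D_window (x y : p_seqZ R a) m th : cubeZ x -> cubeZ y -> 0 <= th ->
  (forall i : int, (absz i <= m)%N -> p_supdist (x i) (y i) <= th) ->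
  D x y <= 4 * th + 2 * (2^-1) ^+ m.
Proof.
move=> cx cy th0 hw.
apply: (D_le_of (g := fun k => 2 * th * (2^-1) ^+ k + (if (m < k)%N then 2 * (2^-1) ^+ k else 0))) => //.
  move=> k; have hk := half_exp_pos k.
  case: (leqP k m) => hkm.
    rewrite addr0; case: (posnP k) => [->|k0].
      rewrite /p_Dterm /= expr0 mulr1; have := hw 0 (leq0n m); lra.
    rewrite Dterm_S //.
    have h1 := hw k%:Z hkm.
    have h2 : p_supdist (x (- k%:Z)) (y (- k%:Z)) <= th by apply: hw; rewrite abszN.
    have -> : 2 * th * (2^-1) ^+ k = (2^-1) ^+ k * (2 * th) by ring.
    apply: ler_wpM2l; [exact: ltW| lra].
  apply: le_trans (Dterm_le k cx cy) _.
  rewrite lerDr; apply: mulr_ge0; [apply: mulr_ge0 => //|]; exact: ltW.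
move=> K; rewrite big_split /= -big_mkcond /= -!mulr_sumr.
have := @geo_le0 R K; have := @geo_le R m.+1 K.
rewrite exprS.
have := half_exp_pos m.
nra.
Qed.

Lemma bowen_le (x y : p_seqZ R a) L b : 0 <= b ->
  (forall n, (n < L)%N -> D (iter n sh x) (iter n sh y) <= b) ->
  p_bowen D sh L x y <= b.
Proof. by move=> b0 h; apply: bmax_le => // i; exact: h. Qed.

Lemma bowen_ge (x y : p_seqZ R a) L : (0 < L)%N -> D x y <= p_bowen D sh L x y.
Proof. by move=> L0; exact: (bmax_ub (fun n : 'I_L => D (iter n sh x) (iter n sh y)) (Ordinal L0)). Qed.

End P3.
Section P4a.
Variable R : realType.
Variables a N : nat.

Lemma supdistN_comp (p q : 'I_N -> 'I_a -> R) j i : `|p j i - q j i| <= supdistN p q.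
Proof.
apply: le_trans (bmax_ub (fun j => \big[Num.max/0]_(i < a) `|p j i - q j i|) j).
exact: (bmax_ub (fun i => `|p j i - q j i|) i).
Qed.

Lemma supdistN_le (p q : 'I_N -> 'I_a -> R) b : 0 <= b ->
  (forall j i, `|p j i - q j i| <= b) -> supdistN p q <= b.
Proof.
move=> b0 h; apply: bmax_le => // j; apply: bmax_le => // i; exact: h.
Qed.

Lemma supdistN_ge0 (p q : 'I_N -> 'I_a -> R) : 0 <= supdistN p q.
Proof. exact: bmax_ge0. Qed.

End P4a.

Lemma diam_elem (R : realType) (T : Type) (rho : T -> T -> R) (V : set T) x y :
  V x -> V y -> ((rho x y)%:E <= p_diam rho V)%E.
Proof. by move=> vx vy; apply: ereal_sup_ubound; exists x => //; exists y. Qed.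

Section P4.
Variable R : realType.
Variables a N : nat.
Hypothesis N0 : (0 < N)%N.
Variable K : set ('I_N -> 'I_a -> R).
Variable n : nat.
Variable U : 'I_n -> set ('I_N -> 'I_a -> R).
Variable delta : R.
Hypothesis delta0 : 0 < delta.
Hypothesis UK : forall i, U i `<=` K.
Hypothesis Udiam : forall i, (p_diam (@supdistN R a N) (U i) < delta%:E)%E.
Hypothesis Kcov : K `<=` \bigcup_i U i.
Variables m L : nat.
Hypothesis L0 : (0 < L)%N.
Variable eps : R.
Hypothesis heps : 12 * delta + 2 * (2^-1) ^+ m < eps.

Local Notation X := (p_XK K).
Local Notation D := (@p_Dmetric R a).
Local Notation sh := (@p_shift R a).
Local Notation dL := (p_bowen D sh L).

Definition Bn := (2 * m + 3 + L %/ N)%N.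
Definition sj (r : 'I_N) (j : nat) : int := r%:Z - (N * m.+1)%:Z + (j * N)%:Z.
Definition Tb := (N * m.+1 + Bn * N)%N.
Definition Ty := ('I_N * {ffun 'I_Bn -> 'I_n})%type.

Definition Aset (p : Ty) : set (p_seqZ R a) :=
  [set y | X y /\ exists z : 'I_Bn -> ('I_N -> 'I_a -> R),
     (forall j, U (p.2 j) (z j)) /\
     exists2 th, th < delta & forall j : 'I_Bn, supdistN (@p_restr R a N y (sj p.1 j)) (z j) <= th].

Lemma window_decomp (r : 'I_N) k (i : int) : (k < L)%N -> (absz i <= m)%N ->
  exists j : 'I_Bn, exists jj : 'I_N, i + k%:Z = sj r j + jj%:Z.
Proof.
move=> kL im.
pose u : int := i + k%:Z - r%:Z + (N * m.+1)%:Z.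
have u0 : 0 <= u by rewrite /u; have := ltn_ord r; nia.
pose U0 := absz u.
have eU : u = U0%:Z by rewrite /U0; lia.
have hj : (U0 %/ N < Bn)%N.
  rewrite ltn_divLR // /Bn.
  have hU : (U0 <= m + L + N * m + N)%N.
    have : U0%:Z <= (m + L + N * m + N)%N%:Z by rewrite -eU /u; have := ltn_ord r; lia.
    lia.
  have := divn_eq L N; have := ltn_pmod L N0; nia.
exists (Ordinal hj); exists (Ordinal (ltn_pmod U0 N0)).
rewrite /sj /=.
have := divn_eq U0 N.
move: eU; rewrite /u => eU hd.
lia.
Qed.

Lemma block_bound (r : 'I_N) (j : 'I_Bn) (jj : 'I_N) : (absz (sj r j + jj%:Z)%R <= Tb)%N.
Proof.
rewrite /sj /Tb; have := ltn_ord r; have := ltn_ord j; have := ltn_ord jj.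
nia.
Qed.

Lemma restrE (y : p_seqZ R a) l (jj : 'I_N) c : @p_restr R a N y l jj c = y (l + jj%:Z) c.
Proof. by []. Qed.

Lemma A_sub p : Aset p `<=` X.
Proof. by move=> y []. Qed.

Lemma XK_cube y : X y -> cubeZ y.
Proof. by case. Qed.

Lemma A_coord p y : Aset p y -> exists z : 'I_Bn -> ('I_N -> 'I_a -> R),
   (forall j, U (p.2 j) (z j)) /\ exists2 th, th < delta &
   forall (j : 'I_Bn) (jj : 'I_N) c, `|y (sj p.1 j + jj%:Z) c - z j jj c| <= th.
Proof.
move=> [_ [z [hz [th hth hs]]]]; exists z; split => //; exists th => // j jj c.
rewrite -restrE; apply: le_trans (hs j); exact: supdistN_comp.
Qed.

Lemma A_diam_le p y1 y2 : Aset p y1 -> Aset p y2 -> dL y1 y2 <= 12 * delta + 2 * (2^-1) ^+ m.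
Proof.
move=> A1 A2; have d0 := delta0.
have c1 := XK_cube (A_sub A1); have c2 := XK_cube (A_sub A2).
have [z1 [hz1 [th1 th1d h1]]] := A_coord A1.
have [z2 [hz2 [th2 th2d h2]]] := A_coord A2.
have hm : 0 <= 2 * (2^-1 : R) ^+ m by apply: mulr_ge0 => //; exact: ltW (half_exp_pos _ _).
apply: bowen_le; first by apply: addr_ge0 => //; apply: mulr_ge0 => //; exact: ltW.
move=> k kL.
have -> : 12 * delta = 4 * (3 * delta) by ring.
apply: D_window; [exact: cubeZ_iter|exact: cubeZ_iter|lra|].
move=> i im; rewrite !iter_shift.
apply: bmax_le; first lra.
move=> c.
have [j [jj ->]] := window_decomp p.1 kL im.
have hzz : supdistN (z1 j) (z2 j) < delta.
  rewrite -lte_fin; apply: le_lt_trans (Udiam (p.2 j)).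
  by apply: diam_elem; [exact: hz1|exact: hz2].
have e1 := h1 j jj c; have e2 := h2 j jj c.
have e3 := le_lt_trans (supdistN_comp (z1 j) (z2 j) jj c) hzz.
set t := sj p.1 j + jj%:Z in e1 e2 *.
have tri : `|y1 t c - y2 t c| <= `|y1 t c - z1 j jj c| + `|z1 j jj c - z2 j jj c| + `|z2 j jj c - y2 t c|.
  have -> : y1 t c - y2 t c = (y1 t c - z1 j jj c) + (z1 j jj c - z2 j jj c) + (z2 j jj c - y2 t c) by ring.
  apply: le_trans (ler_normD _ _) _; rewrite lerD2r.
  exact: ler_normD.
rewrite (distrC (z2 j jj c)) in tri.
lra.
Qed.

Lemma A_diam p : (p_diam dL (Aset p) < eps%:E)%E.
Proof.
apply: le_lt_trans (_ : (p_diam dL (Aset p) <= (12 * delta + 2 * (2^-1) ^+ m)%:E)%E) _.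
  rewrite /p_diam; apply: ge_ereal_sup => _ [y1 A1 [y2 A2 <-]].
  by rewrite lee_fin; exact: (A_diam_le A1 A2).
by rewrite lte_fin.
Qed.

Lemma A_open p : p_open_in X dL (Aset p).
Proof.
move=> y Ay; have d0 := delta0.
have Xy := A_sub Ay; have cy := XK_cube Xy.
move: (Ay) => [_ [z [hz [th hth hs]]]].
have h2T : 0 < (2 : R) ^+ Tb by apply: exprn_gt0.
exists ((delta - th) / 2 / 2 ^+ Tb).
  apply: divr_gt0 => //; lra.
move=> y' Xy' hd.
split => //; exists z; split => //; exists ((delta + th) / 2); first lra.
have cy' := XK_cube Xy'.
have hD : D y y' < (delta - th) / 2 / 2 ^+ Tb.
  by apply: le_lt_trans hd; apply: bowen_ge.
have hB : (0 < Bn)%N by rewrite /Bn addnAC addnS.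
have hth0 : 0 <= th by apply: le_trans (supdistN_ge0 _ _) (hs (Ordinal hB)).
move=> j; apply: supdistN_le; first lra.
move=> jj c; rewrite restrE.
set t := sj p.1 j + jj%:Z.
have e1 : `|y t c - z j jj c| <= th.
  by apply: le_trans (hs j); rewrite -restrE; exact: supdistN_comp.
have e2 : `|y t c - y' t c| <= 2 ^+ Tb * D y y'.
  apply: le_trans (coord_le t c cy cy') _.
  apply: ler_wpM2r; first exact: D_ge0.
  apply: ler_weXn2l; [by rewrite ler1n | exact: (block_bound p.1 j jj)].
have e3 : 2 ^+ Tb * D y y' <= (delta - th) / 2.
  by rewrite mulrC -ler_pdivlMr //; exact: ltW.
have tri : `|y' t c - z j jj c| <= `|y' t c - y t c| + `|y t c - z j jj c|.
  have -> : y' t c - z j jj c = (y' t c - y t c) + (y t c - z j jj c) by ring.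
  exact: ler_normD.
rewrite distrC in e2.
lra.
Qed.

Lemma A_cover x : X x -> exists p, Aset p x.
Proof.
move=> Xx; move: (Xx) => [cx [l hl]].
have Nz : N%:Z != 0 by rewrite eqz_nat -lt0n.
have r0 := modz_ge0 l Nz.
have rN : (l %% N%:Z)%Z < N%:Z by apply: ltz_pmod; rewrite ltz_nat.
have rN' : (absz (l %% N%:Z)%Z < N)%N by lia.
pose rr := Ordinal rN'.
have err : rr%:Z = (l %% N%:Z)%Z by rewrite /= gez0_abs.
have hq := divz_eq l N%:Z.
have hK : forall j : 'I_Bn, K (@p_restr R a N x (sj rr j)).
  move=> j.
  have -> : sj rr j = l + (j%:Z - m.+1%:Z - (l %/ N%:Z)%Z) * N%:Z.
    rewrite /sj err; rewrite {2}hq; rewrite !PoszM; ring.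
  exact: hl.
have : forall j : 'I_Bn, exists i : 'I_n, U i (@p_restr R a N x (sj rr j)).
  move=> j; have [i _ hi] := Kcov (hK j); by exists i.
move=> /choice [f hf].
exists (rr, [ffun j => f j]); split => //.
exists (fun j => @p_restr R a N x (sj rr j)); split.
  by move=> j /=; rewrite ffunE.
exists 0 => //.
move=> j; apply: supdistN_le => // j' i; by rewrite subrr normr0.
Qed.

Lemma cover_ex : p_has_cover X dL eps (N * n ^ Bn).
Proof.
have e : (N * n ^ Bn = #|{: Ty}|)%N by rewrite card_prod card_ffun !card_ord.
exists (fun i => Aset (enum_val (cast_ord e i))); split.
- move=> i; exact: A_sub.
- move=> i; exact: A_open.
- move=> i; exact: A_diam.
move=> x /A_cover [p hp].
exists (cast_ord (esym e) (enum_rank p)) => //.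
by rewrite cast_ordKV enum_rankK.
Qed.

End P4.
Section P5.
Variable R : realType.
Variable T : Type.

Lemma ln_nat_ge0 k : 0 <= ln (k%:R : R).
Proof.
case: k => [|k]; first by rewrite ln0.
by apply: ln_ge0; rewrite ler1n.
Qed.

Lemma ln_nat_le j k : (j <= k)%N -> ln (j%:R : R) <= ln (k%:R : R).
Proof.
case: j => [|j] hjk; first by rewrite ln0 // ln_nat_ge0.
rewrite ler_ln ?ler_nat // posrE ltr0n //; lia.
Qed.

Lemma covnum_ge0 (E : set T) (rho : T -> T -> R) eps : (0 <= p_covnum E rho eps)%E.
Proof. by apply: le_ereal_inf_tmp => _ [k _ <-]; rewrite lee_fin. Qed.

Lemma covnum_le (E : set T) (rho : T -> T -> R) eps k :
  p_has_cover E rho eps k -> (p_covnum E rho eps <= (k%:R)%:E)%E.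
Proof. by move=> h; apply: ereal_inf_lbound; exists k. Qed.

Lemma covnum_fin (E : set T) (rho : T -> T -> R) eps : (p_covnum E rho eps < +oo)%E ->
  exists k, p_has_cover E rho eps k /\ p_covnum E rho eps = (k%:R)%:E.
Proof.
move=> hlt.
have ex : exists k, `[< p_has_cover E rho eps k >].
  apply: contrapT => hno.
  have : [set (n%:R : R)%:E | n in p_has_cover E rho eps] = set0.
    apply/seteqP; split => [x [k hk _]|//]; apply: hno; exists k; exact/asboolP.
  by move: hlt; rewrite /p_covnum => /[swap] ->; rewrite ereal_inf0.
case: (ex_minnP ex) => k /asboolP hk hmin.
exists k; split => //.
apply/eqP; rewrite eq_le covnum_le //=.
apply: le_ereal_inf_tmp => _ [j hj <-]; rewrite lee_fin ler_nat.
by apply: hmin; exact/asboolP.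
Qed.

Lemma logcov_ge0 (E : set T) (rho : T -> T -> R) eps : (0 <= p_logE (p_covnum E rho eps))%E.
Proof.
have [hlt|hge] := boolP (p_covnum E rho eps < +oo)%E.
  have [k [_ ->]] := covnum_fin hlt; rewrite /= lee_fin; exact: ln_nat_ge0.
move: hge; rewrite -leNgt leye_eq => /eqP ->; exact: leey.
Qed.

Lemma logcov_le (E : set T) (rho : T -> T -> R) eps k : p_has_cover E rho eps k ->
  (p_logE (p_covnum E rho eps) <= (ln (k%:R : R))%:E)%E.
Proof.
move=> hk; have hle := covnum_le hk.
have [j [_ ej]] := covnum_fin (le_lt_trans hle (ltry _)).
rewrite ej /= lee_fin; apply: ln_nat_le.
by move: hle; rewrite ej lee_fin ler_nat.
Qed.

End P5.
Lemma atr0P (R : realType) (P : R -> Prop) : (\forall x \near 0^'+, P x) ->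
  exists2 e : R, 0 < e & forall x, 0 < x -> x < e -> P x.
Proof.
move=> /nbhs_ballP [e e0 he]; exists e => // x x0 xe; apply: he => //.
by rewrite /ball /= sub0r normrN gtr0_norm.
Qed.

Lemma atr0P' (R : realType) (P : R -> Prop) : 
  (exists2 e : R, 0 < e & forall x, 0 < x -> x < e -> P x) -> \forall x \near 0^'+, P x.
Proof.
move=> [e e0 he]; near=> x; apply: he.
  by near: x; exact: nbhs_right_gt.
by near: x; exact: nbhs_right_lt.
Unshelve. all: by end_near.
Qed.

Lemma ev_nat (P : nat -> Prop) L0 : (forall L, (L0 <= L)%N -> P L) -> \forall L \near \oo, P L.
Proof. by move=> h; exists L0. Qed.

Lemma limf_esup_le_near (T0 : choiceType) (T : filteredType T0) (R : realType) (F : set_system T) (f : T -> \bar R) b :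
  (\forall x \near F, (f x <= b)%E) -> (limf_esup f F <= b)%E.
Proof.
move=> h; rewrite limf_esupE; apply: ge_ereal_inf; exists (ereal_sup (f @` [set x | (f x <= b)%E])).
  by exists [set x | (f x <= b)%E].
by apply: ge_ereal_sup => _ [x hx <-].
Qed.

Lemma limf_esup_lt (T0 : choiceType) (T : filteredType T0) (R : realType) (F : set_system T) {FF : Filter F} (f : T -> \bar R) c :
  (limf_esup f F < c)%E -> \forall x \near F, (f x < c)%E.
Proof.
rewrite limf_esupE => /ereal_inf_lt [_ [V FV <-] hV].
apply: filterS FV => x Vx; apply: le_lt_trans hV.
by apply: ereal_sup_ubound; exists x.
Qed.

Lemma limf_esup_ge (T0 : choiceType) (T : filteredType T0) (R : realType) (F : set_system T) {FF : ProperFilter F} (f : T -> \bar R) b :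
  (\forall x \near F, (b <= f x)%E) -> (b <= limf_esup f F)%E.
Proof.
move=> h; rewrite limf_esupE; apply: le_ereal_inf_tmp => _ [V FV <-].
have [x [Vx bx]] : exists x, V x /\ (b <= f x)%E.
  have := filter_ex (filterI FV h); by move=> [x [? ?]]; exists x.
apply: le_trans bx _; by apply: ereal_sup_ubound; exists x.
Qed.
Section P6.
Variable R : realType.

Lemma exists_m (e : R) : 0 < e -> exists m, 2 * (2^-1) ^+ m < e.
Proof.
move=> e0; exists (Num.truncn (2 / e)).
set m := Num.truncn (2 / e).
have h1 := truncnS_gt (2 / e); rewrite -/m in h1.
have h2 : (m.+1 <= 2 ^ m)%N by apply: ltn_expl.
have h3 : (m.+1%:R : R) <= 2 ^+ m by rewrite -natrX ler_nat.
have h4 : 2 / e < 2 ^+ m := lt_le_trans h1 h3.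
have p2 : (0 : R) < 2 ^+ m by apply: exprn_gt0.
by rewrite exprVn ltr_pdivrMr // mulrC -ltr_pdivrMr.
Qed.

Lemma ln_prod_le (N n B : nat) : (0 < N)%N ->
  ln (((N * n ^ B)%N)%:R : R) <= ln N%:R + B%:R * ln n%:R.
Proof.
move=> N0.
case: n => [|n].
  case: B => [|B]; first by rewrite expn0 muln1 mul0r addr0.
  have l0 : ln (0%:R : R) = 0 by rewrite ln0.
  by rewrite exp0n // muln0 l0 mulr0 addr0 ln_nat_ge0.
have p1 : (N%:R : R) \is Num.pos by rewrite posrE ltr0n.
have p2 : ((n.+1)%:R ^+ B : R) \is Num.pos by rewrite posrE exprn_gt0 // ltr0n.
by rewrite natrM natrX (lnM p1 p2) lnXn ?ltr0n // mulr_natl.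
Qed.

Lemma Bn_le (N m L : nat) : (0 < N)%N ->
  ((Bn N m L)%:R : R) <= (2 * m + 3)%N%:R + L%:R / N%:R.
Proof.
move=> N0; rewrite /Bn natrD lerD2l ler_pdivlMr ?ltr0n // -natrM ler_nat.
exact: leq_divM.
Qed.

End P6.

Lemma G_eps (R : realType) (a N : nat) (N0 : (0 < N)%N) (K : set ('I_N -> 'I_a -> R))
  (eps : R) (n : nat) (eta : R) :
  0 < eps -> eps < 1 -> 0 < eta -> p_has_cover K (@supdistN R a N) (eps / 20) n ->
  (limn_esup (fun L : nat => (p_logE (p_covnum (p_XK K) (p_bowen (@p_Dmetric R a) (@p_shift R a) L) eps)
        * ((L%:R * ln eps^-1)^-1)%:E)%E)
    <= ((ln (n%:R : R)) / (N%:R * ln eps^-1) + eta)%:E)%E.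
Proof.
move=> e0 e1 eta0 [U [_ _ Udiam Kcov]].
have ell0 : 0 < ln eps^-1 by apply: ln_gt0; rewrite invf_gt1.
set ell := ln eps^-1 in ell0 *.
have [m hm] := @exists_m R (eps / 5) (divr_gt0 e0 (ltr0n _ 5)).
have d0 : 0 < eps / 20 by apply: divr_gt0.
have heps : 12 * (eps / 20) + 2 * (2^-1) ^+ m < eps by lra.
set x := ln (N%:R : R); set y := ln (n%:R : R).
have x0 : 0 <= x := ln_nat_ge0 _ _.
have y0 : 0 <= y := ln_nat_ge0 _ _.
set C := (x + (2 * m + 3)%N%:R * y) / ell.
have C0 : 0 <= C by apply: divr_ge0 => //; [apply: addr_ge0 => //; apply: mulr_ge0|exact: ltW].
apply: limf_esup_le_near; apply: (@ev_nat _ (Num.truncn (C / eta)).+1) => L hL.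
have L0 : (0 < L)%N by apply: leq_trans hL.
have hc := cover_ex N0 d0 Udiam Kcov L0 heps.
have h1 := logcov_le hc.
have hL' : C / eta < L%:R.
  apply: lt_le_trans (truncnS_gt _) _; by rewrite ler_nat.
have hLe : C < eta * L%:R by move: hL'; rewrite ltr_pdivrMr // mulrC.
have Lp : (0 : R) < L%:R by rewrite ltr0n.
have Np : (0 : R) < N%:R by rewrite ltr0n.
apply: le_trans (_ : _ <= (ln ((N * n ^ Bn N m L)%N%:R))%:E * ((L%:R * ell)^-1)%:E)%E _.
  by apply: lee_wpmul2r => //; rewrite lee_fin invr_ge0; apply: mulr_ge0; apply: ltW.
rewrite -EFinM lee_fin.
have h2 := ln_prod_le R n (Bn N m L) N0; rewrite -/x -/y in h2.
have h3 := Bn_le R m L N0.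
have h4 : (Bn N m L)%:R * y <= (2 * m + 3)%N%:R * y + (L%:R / N%:R) * y.
  by rewrite -mulrDl; apply: ler_wpM2r.
have h5 : x + (2 * m + 3)%N%:R * y = C * ell by rewrite /C mulrVK // unitfE gt_eqF.
rewrite ler_pdivrMr; last by apply: mulr_gt0.
have -> : (y / (N%:R * ell) + eta) * (L%:R * ell) = L%:R / N%:R * y + eta * L%:R * ell.
  by field; rewrite (gt_eqF Np) (gt_eqF ell0).
have h6 : C * ell <= eta * L%:R * ell by apply: ler_wpM2r; [exact: ltW|exact: ltW].
lra.
Qed.
Section P7.
Variable R : realType.
Variables a N : nat.
Variable K : set ('I_N -> 'I_a -> R).

Definition Fk (d : R) : \bar R :=
  (p_logE (p_covnum K (@supdistN R a N) d) * ((ln d^-1)^-1)%:E)%E.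

Lemma ell_gt0 (d : R) : 0 < d -> d < 1 -> 0 < ln d^-1.
Proof. by move=> d0 d1; apply: ln_gt0; rewrite invf_gt1. Qed.

Lemma Fk_ge0 d : 0 < d -> d < 1 -> (0 <= Fk d)%E.
Proof.
move=> d0 d1; apply: mule_ge0; first exact: logcov_ge0.
by rewrite lee_fin invr_ge0; apply: ltW; apply: ell_gt0.
Qed.

Lemma dim_ge0 : (0 <= upper_mink_dim K (@supdistN R a N))%E.
Proof.
apply: limf_esup_ge; apply: atr0P'; exists 1 => // d d0 d1.
exact: Fk_ge0.
Qed.

Lemma Fk_lt d c : 0 < d -> d < 1 -> (Fk d < c%:E)%E ->
  exists n, p_has_cover K (@supdistN R a N) d n /\ ln (n%:R : R) <= c * ln d^-1.
Proof.
move=> d0 d1; have l0 := ell_gt0 d0 d1.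
rewrite /Fk.
have [hlt|hge] := boolP (p_covnum K (@supdistN R a N) d < +oo)%E.
  have [k [hk ->]] := covnum_fin hlt.
  rewrite /= -EFinM lte_fin ltr_pdivrMr // => h.
  by exists k; split => //; apply: ltW.
move: hge; rewrite -leNgt leye_eq => /eqP -> /=.
by rewrite gt0_mulye ?lte_fin ?invr_gt0.
Qed.

Lemma ratio_bound (eps eta : R) : 0 < eps -> 0 < eta ->
  eps < expR (- (ln 20 / eta)) -> ln ((eps / 20)^-1) <= (1 + eta) * ln eps^-1.
Proof.
move=> e0 eta0 he.
have p20 : (20 : R) \is Num.pos by rewrite posrE.
have pe : eps^-1 \is Num.pos by rewrite posrE invr_gt0.
rewrite invf_div (lnM p20 pe).
have h1 : ln eps < - (ln 20 / eta).
  by rewrite -ltr_expR lnK ?posrE.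
have h2 : ln eps^-1 = - ln eps by rewrite lnV ?posrE.
rewrite h2.
have h3 : ln 20 / eta < - ln eps by rewrite ltrNr.
have h4 : ln 20 < eta * - ln eps by rewrite -ltr_pdivrMl // mulrC.
lra.
Qed.

End P7.

Unset Implicit Arguments.

Theorem lemma5p1 (R : realType) (a N : nat) (K : set ('I_N -> 'I_a -> R)) :
  (0 < N)%N ->
  closed_cubeN K ->
  (upper_mmdim (p_XK K) (@p_shift R a) (@p_Dmetric R a)
     <= upper_mink_dim K (@supdistN R a N) * (N%:R^-1)%:E)%E.
Proof.
move=> N0 _.
have Np : (0 : R) < N%:R by rewrite ltr0n.
have d0 := @dim_ge0 R a N K.
have hlim : upper_mink_dim K (@supdistN R a N) = limf_esup (@Fk R a N K) (0 : R)^'+ by [].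
case hd : (upper_mink_dim K (@supdistN R a N)) => [r| |]; rewrite hd in d0; last first.
- by [].
- by rewrite gt0_mulye ?leey // lte_fin invr_gt0.
rewrite lee_fin in d0.
rewrite -EFinM; apply/lee_addgt0Pr => e e0.
pose e' := Num.min 1 (e / (r + 3)).
have e'0 : 0 < e' by rewrite lt_min ltr01 /=; apply: divr_gt0 => //; lra.
have e'1 : e' <= 1 by rewrite ge_min lexx.
have e'2 : e' <= e / (r + 3) by rewrite ge_min lexx orbT.
pose c := r + e'.
have hc : (upper_mink_dim K (@supdistN R a N) < c%:E)%E by rewrite hd lte_fin /c; lra.
rewrite hlim in hc.
have [d1 d10 hd1] := atr0P (limf_esup_lt hc).
apply: le_trans (_ : _ <= (c * (1 + e') / N%:R + e')%:E)%E _; last first.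
  rewrite -EFinD lee_fin.
  have hN1 : N%:R^-1 <= (1 : R) by rewrite invf_le1 // ler1n.
  have hN0 : (0 : R) <= N%:R^-1 by rewrite invr_ge0 ltW.
  have hr3 : e' * (r + 3) <= e by rewrite -ler_pdivlMr //; lra.
  have -> : c * (1 + e') / N%:R = r * N%:R^-1 + (e' * (1 + r + e')) * N%:R^-1 by rewrite /c; field; rewrite gt_eqF.
  have : e' * (1 + r + e') * N%:R^-1 <= e' * (1 + r + e') by rewrite ler_piMr // mulr_ge0 //; lra.
  nra.
apply: limf_esup_le_near; apply: atr0P'.
exists (Num.min (Num.min 1 (20 * d1)) (expR (- (ln 20 / e')))).
  by rewrite !lt_min ltr01 expR_gt0 mulr_gt0.
move=> eps eps0; rewrite !lt_min => /andP[/andP[eps1 eps2] eps3].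
have dd0 : 0 < eps / 20 by apply: divr_gt0.
have dd1 : eps / 20 < 1 by lra.
have dd2 : eps / 20 < d1 by lra.
have [n [hn hln]] := Fk_lt dd0 dd1 (hd1 _ dd0 dd2).
apply: le_trans (G_eps N0 eps0 eps1 e'0 hn) _.
rewrite lee_fin lerD2r.
have l0 := ell_gt0 eps0 eps1.
have hrat := ratio_bound eps0 e'0 eps3.
have c0 : 0 <= c by rewrite /c; lra.
have h1 : ln (n%:R : R) <= c * ((1 + e') * ln eps^-1).
  apply: le_trans hln _; exact: ler_wpM2l.
rewrite ler_pdivrMr; last exact: mulr_gt0.
have -> : c * (1 + e') / N%:R * (N%:R * ln eps^-1) = c * ((1 + e') * ln eps^-1).
  by field; rewrite gt_eqF.
exact: h1.
Qed.
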